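(* Let $X$ be a topological space and $\{X_\alpha\}_{\alpha\in I}$ a family of open subspaces of $X$, each of which is dense-connected. If $X_\alpha\cap X_\beta\neq\emptyset$ for any two distinct $\alpha,\beta\in I$, then $\bigcup_{\alpha\in I}X_\alpha$ is dense-connected.
   Context: A space $X$ is dense-connected if every dense subset of $X$ (with the subspace topology) is connected. *)

(* Defs.v *)
From HB Require Import structures.
From mathcomp Require Import all_boot all_order all_algebra.
From mathcomp Require Import all_classical topology.
Set Implicit Arguments. Unset Strict Implicit. Unset Printing Implicit Defensive.
Local Open Scope classical_set_scope.

(* D is dense in the subspace Y of X: D is contained in Y and every
   nonempty relatively open subset of Y (i.e. O `&` Y with O open in X)
   meets D. *)
Definition dense_in (T : topologicalType) (Y D : set T) : Prop :=
  D `<=` Y /\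
  forall O : set T, open O -> O `&` Y !=set0 -> O `&` D !=set0.

(* The subspace Y is dense-connected: every dense subset of Y is connected
   (mathcomp's [connected] is connectedness in the subspace topology). *)
Definition dense_connected (T : topologicalType) (Y : set T) : Prop :=
  forall D : set T, dense_in Y D -> connected D.

(* Main.v *)
Require Import Defs.
From mathcomp Require Import all_boot all_order all_algebra.
From mathcomp Require Import all_classical topology.
Local Open Scope classical_set_scope.

Theorem proposition4p13 (T : topologicalType) (I : Type) (X : I -> set T) :
  (forall a, open (X a)) ->
  (forall a, dense_connected (X a)) ->
  (forall a b, a <> b -> X a `&` X b !=set0) ->
  dense_connected (\bigcup_(a in [set: I]) X a).
Proof.
move=> oX dX iX D [DU Dd].
have dense_a : forall a, dense_in (X a) (D `&` X a).
  move=> a; split; first by move=> x [].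
  move=> O oO [x [Ox Xx]].
  have [|y [[Oy Xy] Dy]] := Dd (O `&` X a) (openI oO (oX a)).
    by exists x; split; [|exists a].
  by exists y; split.
have ca : forall a, connected (D `&` X a) by move=> a; exact: dX.
case: (pselect (D = set0)) => [->|/eqP/set0P [x Dx]]; first exact: connected0.
have [a0 _ Xx] := DU x Dx.
have -> : D = \bigcup_(b in [set: I]) ((D `&` X a0) `|` (D `&` X b)).
  apply/seteqP; split.
    move=> y Dy; have [b _ Xy] := DU y Dy; exists b => //; by right.
  by move=> y [b _ [[]|[]]].
apply: bigcup_connected.
  by exists x => b _; left.
move=> b _; apply: connectedU => //.
case: (pselect (a0 = b)) => [<-|ab].
  by exists x; split; split.
have [z [Xz1 Xz2]] := iX _ _ ab.
have [|y [[Xy1 Xy2] Dy]] := Dd (X a0 `&` X b) (openI (oX a0) (oX b)).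
  by exists z; split; [|exists a0].
by exists y; split; split.
Qed.
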